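(* Let $I\subseteq \mathbb{K}[x_1,\dots,x_n]$ be a square-free monomial ideal which contains no variable. Assume that for some integer $s\geq 1$ the ideal $I^s$ has linear quotients with respect to (the restriction to $G(I^s)$ of) a monomial order. Then $I$ satisfies the strong gcd condition.
   Context: $G(I)$ denotes the set of minimal monomial generators of a monomial ideal $I$. A monomial ideal $I$ satisfies the strong gcd condition if there exists a linear order $\prec$ on $G(I)$ such that for any two monomials $u\prec v$ in $G(I)$ with $\gcd(u,v)=1$ there exists a monomial $w\in G(I)$ with $w\neq u,v$, $u\prec w$ and $w\mid uv$. A monomial order is a multiplicative total order on monomials with $1$ least. If $u_1\prec\dots\prec u_t$ is a linear order on $G(J)$, $J$ has linear quotients with respect to it if for every $2\leq i\leq t$ the ideal $(u_1,\dots,u_{i-1}):u_i$ is generated by a subset of the variables. *)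

(* Defs.v *)
(* Monomials in K[x_1..x_n] are modelled by exponent vectors;
   monomial ideals by the set (predicate) of monomials they contain. *)
From mathcomp Require Import all_boot.
Set Implicit Arguments. Unset Strict Implicit. Unset Printing Implicit Defensive.

Definition mon (n : nat) := {ffun 'I_n -> nat}.

Definition mulm n (u v : mon n) : mon n := [ffun i => u i + v i].
Definition onem n : mon n := [ffun _ => 0].
Definition varm n (k : 'I_n) : mon n := [ffun i => nat_of_bool (i == k)].
Definition gcdm n (u v : mon n) : mon n := [ffun i => minn (u i) (v i)].
Definition dvdm n (u v : mon n) : bool := [forall i, u i <= v i].
Definition prodm n (s : seq (mon n)) : mon n := foldr (@mulm n) (@onem n) s.
Definition squarefree_mon n (u : mon n) : Prop := forall i, u i <= 1.

Definition ideal_gen n (gs : seq (mon n)) : mon n -> Prop :=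
  fun m => exists2 g, g \in gs & dvdm g m.

Definition monomial_ideal n (I : mon n -> Prop) : Prop :=
  exists gs : seq (mon n), forall m, I m <-> ideal_gen gs m.

Definition mingens n (I : mon n -> Prop) (m : mon n) : Prop :=
  I m /\ forall d, I d -> dvdm d m -> d = m.

Definition ideal_pow n (I : mon n -> Prop) (s : nat) : mon n -> Prop :=
  fun m => exists gs : seq (mon n),
    [/\ size gs = s, (forall g, g \in gs -> I g) & dvdm (prodm gs) m].

Definition squarefree_ideal n (I : mon n -> Prop) : Prop :=
  forall m, mingens I m -> squarefree_mon m.

Definition monomial_order n (lt : rel (mon n)) : Prop :=
  [/\ (forall u, ~~ lt u u),
      (forall u v w, lt u v -> lt v w -> lt u w),
      (forall u v, u <> v -> lt u v \/ lt v u),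
      (forall u v w, lt u v -> lt (mulm u w) (mulm v w)) &
      (forall u, u <> onem n -> lt (onem n) u)].

(* monomials of the colon ideal (u_1,...,u_{i-1}) : u_i, where the u_j are
   the elements of G(J) preceding u = u_i *)
Definition colon_prev n (J : mon n -> Prop) (lt : rel (mon n)) (u : mon n)
  : mon n -> Prop :=
  fun m => exists v, [/\ mingens J v, lt v u & dvdm v (mulm m u)].

Definition gen_by_vars n (C : mon n -> Prop) : Prop :=
  exists S : {set 'I_n}, forall m, C m <-> exists2 k, k \in S & dvdm (varm k) m.

(* J has linear quotients w.r.t. the order lt restricted to G(J)
   (for the first generator the colon ideal is 0 = ideal of the empty set of variables) *)
Definition linear_quotients n (J : mon n -> Prop) (lt : rel (mon n)) : Prop :=
  forall u, mingens J u -> gen_by_vars (colon_prev J lt u).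

Definition strong_gcd n (I : mon n -> Prop) : Prop :=
  exists prec : rel (mon n),
    [/\ (forall u, mingens I u -> ~~ prec u u),
        (forall u v w, mingens I u -> mingens I v -> mingens I w ->
            prec u v -> prec v w -> prec u w),
        (forall u v, mingens I u -> mingens I v -> u <> v -> prec u v \/ prec v u) &
        (forall u v, mingens I u -> mingens I v -> prec u v -> gcdm u v = onem n ->
           exists w, [/\ mingens I w, w <> u, w <> v, prec u w & dvdm w (mulm u v)])].

(* Main.v *)
Require Import Defs.
From mathcomp Require Import all_boot.
From mathcomp Require Import zify.
From Stdlib Require Import Classical.
Set Implicit Arguments. Unset Strict Implicit. Unset Printing Implicit Defensive.

Section Aux.
Variable n : nat.
Implicit Types u v w d m a b c e g : mon n.
Implicit Types gs : seq (mon n).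

Definition powm u s := prodm (nseq s u).

Lemma mulmE u v i : mulm u v i = u i + v i. Proof. by rewrite ffunE. Qed.
Lemma mulmC u v : mulm u v = mulm v u.
Proof. by apply/ffunP=> i; rewrite !ffunE addnC. Qed.
Lemma mul1m u : mulm (onem n) u = u. Proof. by apply/ffunP=> i; rewrite !ffunE. Qed.
Lemma mulm1 u : mulm u (onem n) = u. Proof. by apply/ffunP=> i; rewrite !ffunE addn0. Qed.
Lemma powmE u s i : powm u s i = s * u i.
Proof.
rewrite /powm; elim: s => [|s IH] /=; first by rewrite ffunE.
by rewrite ffunE IH mulSn.
Qed.

Lemma dvdmP u v : reflect (forall i, u i <= v i) (dvdm u v).
Proof. exact: forallP. Qed.
Lemma dvdm_refl u : dvdm u u. Proof. by apply/dvdmP. Qed.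
Lemma dvdm_trans a b c : dvdm a b -> dvdm b c -> dvdm a c.
Proof. move/dvdmP=> h1 /dvdmP h2; apply/dvdmP=> i; exact: leq_trans (h1 i) (h2 i). Qed.
Lemma dvdm_anti a b : dvdm a b -> dvdm b a -> a = b.
Proof.
move/dvdmP=> h1 /dvdmP h2; apply/ffunP=> i; apply/eqP; by rewrite eqn_leq h1 h2.
Qed.

Definition wt m := \sum_i m i.
Lemma wt_lt d m : dvdm d m -> d <> m -> wt d < wt m.
Proof.
move/dvdmP=> H ne.
have [i Hi] : exists i, d i < m i.
  apply: NNPP => C; apply: ne; apply/ffunP=> i; apply/eqP; rewrite eqn_leq H /=.
  rewrite leqNgt; apply/negP => h; apply: C; by exists i.
rewrite /wt (bigD1 i) //= [X in _ < X](bigD1 i) //=.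
rewrite -addSn; apply: leq_add => //. by apply: leq_sum => j _; apply: H.
Qed.

Lemma exists_min (I : mon n -> Prop) m : I m -> exists d, mingens I d /\ dvdm d m.
Proof.
have [N HN] : exists N, wt m < N by exists (wt m).+1.
elim: N m HN => [|N IH] m HN Im; first by rewrite ltn0 in HN.
have [Hmin|Hnot] := classic (forall d, I d -> dvdm d m -> d = m).
  by exists m; split => //; apply: dvdm_refl.
have [d Hd] := not_all_ex_not _ _ Hnot.
have [Id [dd ne]] : I d /\ dvdm d m /\ d <> m by tauto.
have := wt_lt dd ne => hw.
have [e [Me De]] := IH d (leq_trans hw HN) Id.
exists e; split => //; exact: dvdm_trans De dd.
Qed.

Lemma mins_list (I : mon n -> Prop) gs : (forall g, g \in gs -> I g) ->
  exists gs', [/\ size gs' = size gs, (forall g, g \in gs' -> mingens I g)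
                 & dvdm (prodm gs') (prodm gs)].
Proof.
elim: gs => [|g gs IH] H.
  by exists [::]; split => //; apply: dvdm_refl.
have [|gs' [Hs Hm Hd]] := IH.
  by move=> x xin; apply: H; rewrite in_cons xin orbT.
have [d [Md Dd]] := exists_min (H g (mem_head _ _)).
exists (d :: gs'); split => /=; first by rewrite Hs.
  by move=> x; rewrite in_cons => /orP [/eqP -> //| xin]; exact: Hm.
apply/dvdmP => i; rewrite !ffunE.
move/dvdmP: Dd => /(_ i). move/dvdmP: Hd => /(_ i). lia.
Qed.

Lemma dvd_prod g gs : g \in gs -> dvdm g (prodm gs).
Proof.
elim: gs => [|x gs IH] //=; rewrite in_cons => /orP [/eqP ->|gin].
  apply/dvdmP => i; rewrite ffunE; exact: leq_addr.
move/dvdmP: (IH gin) => H; apply/dvdmP => i; rewrite ffunE.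
exact: leq_trans (H i) (leq_addl _ _).
Qed.

Lemma sqf_aux (a b s c : nat) : a <= 1 -> b <= 1 -> 0 < s -> a <= c + s * b -> a <= c + b.
Proof. move=> ha; case: b => [|[|b]] // _ hs; [rewrite muln0 | rewrite muln1]; lia. Qed.

Variable lt : rel (mon n).
Hypothesis mo : monomial_order lt.
Definition le u v := u = v \/ lt u v.

Lemma Mlt_irr u : ~~ lt u u. Proof. by case: mo. Qed.
Lemma Mlt_trans u v w : lt u v -> lt v w -> lt u w. Proof. by case: mo => _ h _ _ _; apply: h. Qed.
Lemma Mlt_total u v : u <> v -> lt u v \/ lt v u. Proof. by case: mo => _ _ h _ _; apply: h. Qed.
Lemma Mlt_mulr u v w : lt u v -> lt (mulm u w) (mulm v w).
Proof. by case: mo => _ _ _ h _; apply: h. Qed.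
Lemma Mlt_mull u v w : lt u v -> lt (mulm w u) (mulm w v).
Proof. by rewrite !(mulmC w); apply: Mlt_mulr. Qed.
Lemma Mle_trans a b c : le a b -> le b c -> le a c.
Proof.
case=> [->|h1] //; case=> [<-|h2]; [by right | right; exact: Mlt_trans h1 h2].
Qed.
Lemma Mle_lt_trans a b c : le a b -> lt b c -> lt a c.
Proof. case=> [->|h1] // h2; exact: Mlt_trans h1 h2. Qed.
Lemma Mle_mul a b c d : le a b -> le c d -> le (mulm a c) (mulm b d).
Proof.
move=> h1 h2; apply: (@Mle_trans _ (mulm b c)).
  case: h1 => [->|h]; [by left | right; exact: Mlt_mulr].
case: h2 => [->|h]; [by left | right; exact: Mlt_mull].
Qed.
Lemma Mdvd_le d m : dvdm d m -> le d m.
Proof.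
move/dvdmP=> H. pose e : mon n := [ffun i => m i - d i].
have He : m = mulm d e by apply/ffunP=> i; rewrite mulmE /e ffunE; have := H i; rewrite addnC subnK //.
rewrite He; case: (classic (e = onem n)) => [->|ne]; first by left; rewrite mulm1.
right; have := (match mo with And5 _ _ _ _ h => h end) e ne.
by move/(Mlt_mull d); rewrite mulm1.
Qed.

Lemma Mprod_ge u gs : (forall g, g \in gs -> le u g) -> le (powm u (size gs)) (prodm gs).
Proof.
elim: gs => [|g gs IH] H; first by left.
rewrite /powm /=; apply: Mle_mul; first exact: H (mem_head _ _).
by apply: IH => x xin; apply: H; rewrite in_cons xin orbT.
Qed.

Lemma pow_min (I : mon n -> Prop) u s : squarefree_ideal I -> mingens I u -> 0 < s ->
  mingens (ideal_pow I s) (powm u s).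
Proof.
move=> sq [Iu Mu] s0; split.
  exists (nseq s u); split; [by rewrite size_nseq | | exact: dvdm_refl].
  by move=> g /nseqP [-> _].
move=> d [gs [Hs Hg Hd]] dd.
have [gs' [Hs' Hm Hd']] := mins_list Hg.
have Eg : forall g, g \in gs' -> g = u.
  move=> g gin; have [Ig _] := Hm g gin; apply: (Mu) => //.
  have := dvdm_trans (dvd_prod gin) (dvdm_trans Hd' (dvdm_trans Hd dd)).
  move/dvdmP => H; apply/dvdmP => i; have := H i; rewrite powmE => hi.
  rewrite -(add0n (u i)); apply: (sqf_aux _ _ s0); last by rewrite add0n.
    exact: sq _ (Hm g gin) i.
  exact: sq _ (conj Iu Mu) i.
have Egs : gs' = nseq s u.
  rewrite -Hs -Hs'; apply/all_pred1P; apply/allP => g gin; apply/eqP; exact: Eg.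
apply: dvdm_anti dd _; rewrite Egs in Hd'; exact: dvdm_trans Hd' Hd.
Qed.

End Aux.

Theorem corollary2p8 (n : nat) (I : mon n -> Prop) (s : nat) (lt : rel (mon n)) :
  monomial_ideal I ->
  squarefree_ideal I ->
  (forall k : 'I_n, ~ I (varm k)) ->
  1 <= s ->
  monomial_order lt ->
  linear_quotients (ideal_pow I s) lt ->
  strong_gcd I.
Proof.
move=> _ sq nov s1 mo lq.
exists (fun a b => lt b a); split.
- by move=> u _; exact: Mlt_irr mo u.
- by move=> u v w _ _ _ /= h1 h2 /=; exact (Mlt_trans mo h2 h1).
- by move=> u v _ _ ne; have [h|h] := Mlt_total mo ne; [right|left].
move=> u v Mu Mv /= hvu gcd1.
case: s s1 lq => // s' _ lq.
have Mus := pow_min sq Mu (ltn0Sn s').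
have [S HS] := lq _ Mus.
have Iv : ideal_pow I s'.+1 (mulm v (powm u s')).
  exists (v :: nseq s' u); split; [by rewrite /= size_nseq | | exact: dvdm_refl].
  by move=> g; rewrite in_cons => /orP [/eqP -> | /nseqP [-> _]]; [exact: Mv.1 | exact: Mu.1].
have [v' [Mv' Dv']] := exists_min Iv.
have Cv : colon_prev (ideal_pow I s'.+1) lt (powm u s'.+1) v.
  exists v'; split => //.
    apply: (Mle_lt_trans mo (Mdvd_le mo Dv')); exact: (Mlt_mulr mo).
  apply: dvdm_trans Dv' _; apply/dvdmP => i; rewrite !mulmE !powmE; lia.
have [k kS kv] := (HS v).1 Cv.
have [h [Mh hlt hd]] := (HS (varm k)).2 (ex_intro2 _ _ k kS (dvdm_refl _)).
have [gs [Hs Hg Hdg]] := Mh.1.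
have [gs' [Hs' Hm Hd']] := mins_list Hg.
have gdiv : forall g, g \in gs' -> dvdm g (mulm (varm k) u).
  move=> g gin; have := dvdm_trans (dvd_prod gin) (dvdm_trans Hd' (dvdm_trans Hdg hd)).
  move/dvdmP => H; apply/dvdmP => i; have := H i; rewrite !mulmE ?powmE => hi; rewrite -?mulSn in hi.
  apply: (sqf_aux _ _ _ hi); [exact: sq _ (Hm g gin) i | exact: sq _ Mu i | by []].
case: (boolP (has (fun g => lt g u) gs')) => [/hasP [w win wlt] | nh]; last first.
  have Hle : forall g, g \in gs' -> le lt u g.
    move=> g gin; case: (classic (g = u)) => [->|ne]; first by left.
    have [h'|h'] := Mlt_total mo ne; last by right.
    by move/negP: nh; case; apply/hasP; exists g.
  have := Mprod_ge mo Hle; rewrite Hs' Hs => H1.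
  have := Mle_trans mo H1 (Mle_trans mo (Mdvd_le mo Hd') (Mdvd_le mo Hdg)).
  case=> [E|L]; first by rewrite E (negbTE (Mlt_irr mo h)) in hlt.
  by have := Mlt_trans mo L hlt; rewrite (negbTE (Mlt_irr mo _)).
have Mw := Hm w win; have wd := gdiv w win.
exists w; split => //.
- by move=> E; rewrite E (negbTE (Mlt_irr mo u)) in wlt.
- move=> E; apply: (nov k); have -> : varm k = v; last exact: Mv.1.
  apply: dvdm_anti kv _; apply/dvdmP => i.
  move/dvdmP: wd => /(_ i); rewrite E mulmE.
  have := congr1 (fun f : mon n => f i) gcd1; rewrite /= !ffunE; lia.
- apply/dvdmP => i; move/dvdmP: wd => /(_ i); move/dvdmP: kv => /(_ i).
  rewrite !mulmE; lia.
Qed.
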